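(* Let $\mathfrak{C}$ be a chromosome-set. A finite string $s$ is a multiplicity-extremal substring (MES) for $\mathfrak{C}$ if and only if there exist characters $c_1\neq c_2$ and $c_3\neq c_4$ such that $c_1s$, $c_2s$, $sc_3$ and $sc_4$ are all substrings of $\mathfrak{C}$.
   Context: All strings are over a fixed finite alphabet $\Sigma$. A cyclic string is a bi-infinite periodic word $\mathbb{Z}\to\Sigma$ up to shift, with least period $d$. A finite string is a substring of a cyclic string $c$ if it is a contiguous block of $c$; its number of occurrences in $c$ is the number of starting positions modulo $d$ at which it appears; a cyclic string is a substring only of itself. A chromosome-set is a (possibly infinite) set of cyclic strings; a string is a substring of it if it is a substring of one of its elements. A (finite or cyclic) string $s$ is a multiplicity-extremal substring (MES) for $\mathfrak{C}$ if $s$ is a substring of $\mathfrak{C}$ and every proper superstring $t$ of $s$ (a string $t\neq s$ containing $s$ as a substring) has, in at least one element of $\mathfrak{C}$, strictly fewer occurrences than $s$. *)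

(* Defs.v *)
From mathcomp Require Import all_boot.
Set Implicit Arguments. Unset Strict Implicit. Unset Printing Implicit Defensive.

Section Strings.
Variable T : finType.

(* A cyclic string is represented by a nonempty word w: it denotes the
   bi-infinite periodic word  i |-> w_(i mod |w|).  Different representatives
   (rotations, powers) denote the same cyclic string; all notions below are
   invariant under this. *)
Definition cyc := {w : seq T | 0 < size w}.

(* letter at position i (i : nat; the word is periodic so nat positions suffice) *)
Definition cletter (w : seq T) (i : nat) : option T := onth w (i %% size w).

Definition period (w : seq T) : nat :=
  head (size w) [seq d <- iota 1 (size w) | rot d w == w].

Definition matches_at (w s : seq T) (p : nat) : bool :=
  all (fun j => cletter w (p + j) == onth s j) (iota 0 (size s)).

(* the cyclic string t appears at position p of the cyclic word w, i.e. the
   bi-infinite word of w shifted by p equals that of t (checking size w * size t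
   positions suffices by periodicity) *)
Definition cmatches_at (w t : seq T) (p : nat) : bool :=
  all (fun i => cletter w (p + i) == cletter t i) (iota 0 (size w * size t)).

Inductive str := Fin of seq T | Cyc of cyc.

Definition occ (t : str) (c : cyc) : nat :=
  match t with
  | Fin s => count (matches_at (val c) s) (iota 0 (period (val c)))
  | Cyc u => count (cmatches_at (val c) (val u)) (iota 0 (period (val c)))
  end.

Definition substr_cyc (t : str) (c : cyc) : Prop :=
  match t with
  | Fin s => exists p, matches_at (val c) s p
  | Cyc u => exists p, cmatches_at (val c) (val u) p
  end.

Definition chromset := cyc -> Prop.

Definition substr_set (t : str) (C : chromset) : Prop :=
  exists c, C c /\ substr_cyc t c.

Definition proper_super (s t : str) : Prop :=
  match s, t with
  | Fin s, Fin t => t != s /\ infix s t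
  | Fin s, Cyc u => substr_cyc (Fin s) u
  | Cyc _, _ => False
  end.

Definition MES (s : str) (C : chromset) : Prop :=
  substr_set s C /\
  forall t, proper_super s t -> exists c, C c /\ occ t c < occ s c.

End Strings.

(* Main.v *)
Require Import Defs.
From mathcomp Require Import all_boot zify.
From Stdlib Require Import Classical_Prop.
Set Implicit Arguments. Unset Strict Implicit. Unset Printing Implicit Defensive.

Section S.
Variable T : finType.
Implicit Types w s : seq T.

Lemma cletter_nth x0 w j : 0 < size w -> cletter w j = Some (nth x0 w (j %% size w)).
Proof.
move=> n0; rewrite /cletter onthE (nth_map x0) //; exact: ltn_pmod.
Qed.

Lemma cl_mul w i k : cletter w (i + k * size w) = cletter w i.
Proof. by rewrite /cletter addnC modnMDl. Qed.

Lemma cl_mod w i : cletter w (i %% size w) = cletter w i.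
Proof. by rewrite /cletter modn_mod. Qed.

Lemma nth_rot x0 w k i : k <= size w -> i < size w ->
  nth x0 (rot k w) i = nth x0 w ((i + k) %% size w).
Proof.
move=> kn iN; rewrite /rot nth_cat size_drop.
case: ifP => h.
  by rewrite nth_drop modn_small; [congr nth; lia | lia].
rewrite nth_take; last by lia.
have -> : i + k = (i - (size w - k)) + size w by lia.
by rewrite modnDr modn_small //; lia.
Qed.

Lemma period_spec w : 0 < size w ->
  [/\ 0 < period w, period w <= size w & rot (period w) w = w].
Proof.
move=> n0; rewrite /period.
case E: [seq d <- iota 1 (size w) | rot d w == w] => [|d l] /=.
  by rewrite rot_size.
have : d \in [seq d <- iota 1 (size w) | rot d w == w] by rewrite E mem_head.
rewrite mem_filter mem_iota => /andP[/eqP -> /andP[h1 h2]]; split=> //; lia.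
Qed.

Lemma head_sorted_le (l : seq nat) x g : sorted leq l -> g \in l -> head x l <= g.
Proof.
case: l => [//|a l] /= Hs; rewrite inE => /orP[/eqP->//|gl].
have := order_path_min leq_trans Hs; move/allP => /(_ g gl) //.
Qed.

Lemma period_min w g : 0 < g -> g <= size w -> rot g w = w -> period w <= g.
Proof.
move=> g0 gn hr; rewrite /period; apply: head_sorted_le.
  apply: sorted_filter; first exact: leq_trans.
  by apply: (sub_sorted (@ltnW)); apply: iota_ltn_sorted.
by rewrite mem_filter hr eqxx mem_iota /=; apply/andP; split; lia.
Qed.

Definition sym w k := forall i, cletter w (i + k) = cletter w i.

Lemma rot_sym w k : 0 < size w -> k <= size w -> rot k w = w -> sym w k.
Proof.
case: w => [//|x0 w'] n0 kn hr i; set w := x0 :: w' in hr kn *.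
rewrite !(cletter_nth x0) //.
have := nth_rot x0 kn (ltn_pmod i n0); rewrite hr modnDml => ->.
by [].
Qed.

Lemma sym_rot w k : 0 < size w -> k <= size w -> sym w k -> rot k w = w.
Proof.
case: w => [//|x0 w'] n0 kn hs; set w := x0 :: w' in hs kn *.
apply: (@eq_from_nth _ x0); first by rewrite size_rot.
move=> i; rewrite size_rot => iN.
rewrite nth_rot //.
have := hs i; rewrite !(cletter_nth x0) // => -[->].
by rewrite modn_small.
Qed.

Lemma sym_mul w k m : sym w k -> sym w (m * k).
Proof.
move=> hs; elim: m => [|m IH] i; first by rewrite mul0n addn0.
by rewrite mulSn addnA IH hs.
Qed.

Lemma sym_dvd w k : 0 < size w -> sym w k -> period w %| k.
Proof.
move=> n0 hk; have [p0 pn pr] := period_spec n0.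
have hp := rot_sym n0 pn pr.
have hm : sym w (k %% period w).
  move=> i; rewrite -[RHS]hk [in RHS](divn_eq k (period w)).
  by rewrite (addnC (_ * _)) addnA (sym_mul _ hp).
rewrite /dvdn; case: eqP => // /eqP hne; exfalso.
have lt : k %% period w < period w by rewrite ltn_pmod.
have := period_min (w := w) (g := k %% period w).
rewrite lt0n hne => /(_ isT); rewrite sym_rot //; last by lia.
move=> /(_ (leq_trans (ltnW lt) pn) erefl); lia.
Qed.

Lemma per_sym w m : 0 < size w -> sym w (m * period w).
Proof.
move=> n0; have [p0 pn pr] := period_spec n0; apply: sym_mul; exact: rot_sym.
Qed.

Lemma matchesP w s p :
  reflect (forall j, j < size s -> cletter w (p + j) = onth s j) (matches_at w s p).
Proof.
apply: (iffP allP) => [h j js|h j]; last by rewrite mem_iota add0n => /h ->.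
by apply/eqP; apply: h; rewrite mem_iota.
Qed.

Lemma matches_per w s p m : 0 < size w ->
  matches_at w s (p + m * period w) = matches_at w s p.
Proof.
move=> n0; apply: eq_all => j; by rewrite addnAC per_sym.
Qed.

Lemma matches_mod w s p : 0 < size w ->
  matches_at w s (p %% period w) = matches_at w s p.
Proof.
by move=> n0; rewrite [in RHS](divn_eq p (period w)) addnC matches_per.
Qed.

Lemma match_cons w a s p :
  matches_at w (a :: s) p = (cletter w p == Some a) && matches_at w s p.+1.
Proof.
apply/idP/idP.
  move/matchesP => h; apply/andP; split.
    by rewrite -[p]addn0 h.
  by apply/matchesP => j js; rewrite addSnnS h.
case/andP => /eqP h0 /matchesP h; apply/matchesP => -[|j] js.
  by rewrite addn0 h0.
by rewrite addnS -addSn h.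
Qed.

Lemma match_rcons w a s p :
  matches_at w (rcons s a) p = matches_at w s p && (cletter w (p + size s) == Some a).
Proof.
apply/idP/idP.
  move/matchesP => h; apply/andP; split.
    apply/matchesP => j js; rewrite h ?size_rcons; last by lia.
    by rewrite -cats1 onth_cat js.
  by rewrite h ?size_rcons // -cats1 onth_cat ltnn subnn.
case/andP => /matchesP h /eqP h0; apply/matchesP => j; rewrite size_rcons ltnS leq_eqVlt.
case/orP => [/eqP ->|js]; first by rewrite h0 -cats1 onth_cat ltnn subnn.
by rewrite h // -cats1 onth_cat js.
Qed.

Lemma count_shift (P : pred nat) d k : (forall p, P (p + d) = P p) ->
  count P (iota k d) = count P (iota 0 d).
Proof.
move=> hP; elim: k => [//|k IH]; rewrite -IH.
have e1 : iota k d.+1 = k :: iota k.+1 d by [].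
have e2 : iota k d.+1 = iota k d ++ [:: k + d] by rewrite -addn1 iotaD.
have : count P (iota k d.+1) = count P (iota k d.+1) by [].
rewrite {1}e1 e2 /= count_cat /= addn0 hP; lia.
Qed.

Lemma count_le1 (P : pred nat) l : uniq l ->
  (forall x y, x \in l -> y \in l -> P x -> P y -> x = y) -> count P l <= 1.
Proof.
elim: l => [//|x l IH] /= /andP[xl ul] h.
case Px: (P x) => /=.
  suff -> : count P l = 0 by [].
  apply/eqP; rewrite -leqn0 leqNgt -has_count; apply/hasPn => y yl.
  apply/negP => Py; have := h x y; rewrite mem_head inE yl orbT => /(_ isT isT Px Py) e.
  by move: xl; rewrite e yl.
apply: IH => // a b al bl; apply: h; by rewrite inE ?al ?bl orbT.
Qed.

Lemma count_ge2 (P : pred nat) l x y : uniq l -> x \in l -> y \in l -> x != y ->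
  P x -> P y -> 2 <= count P l.
Proof.
move=> ul xl yl xy Px Py; rewrite -size_filter.
have -> : 2 = size [:: x; y] by [].
apply: uniq_leq_size; first by rewrite /= inE xy.
by move=> z; rewrite !inE mem_filter => /orP[]/eqP->; rewrite ?Px ?Py ?xl ?yl.
Qed.

Lemma cmatch_all w u p : 0 < size w -> 0 < size u -> cmatches_at w u p ->
  forall i, cletter w (p + i) = cletter u i.
Proof.
move=> n0 m0 /allP h i.
have N0 : 0 < size w * size u by rewrite muln_gt0 n0.
rewrite (divn_eq i (size w * size u)).
set q := i %/ _; set r := i %% _.
have -> : p + (q * (size w * size u) + r) = (p + r) + (q * size u) * size w.
  by rewrite (mulnC (size w)) mulnA; lia.
have -> : q * (size w * size u) + r = r + (q * size w) * size u.
  by rewrite mulnA; lia.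
rewrite !cl_mul.
apply/eqP; apply: h; rewrite mem_iota add0n ltn_pmod //.
Qed.

Definition mcount w s := count (matches_at w s) (iota 0 (period w)).

Lemma count_addk (P : pred nat) k d :
  count (fun x => P (x + k)) (iota 0 d) = count P (iota k d).
Proof.
rewrite -[k]addn0 iotaDl count_map addn0; apply: eq_count => x /=; by rewrite addnC.
Qed.

Lemma mcount_shift w s k : 0 < size w ->
  mcount w s = count (fun x => matches_at w s (x + k)) (iota 0 (period w)).
Proof.
move=> n0; rewrite count_addk count_shift //.
by move=> p; have := matches_per s p 1 n0; rewrite mul1n.
Qed.

Lemma matches_catl w x y p : matches_at w (x ++ y) p -> matches_at w x p.
Proof.
move/matchesP => h; apply/matchesP => j js.
by rewrite h ?size_cat ?onth_cat ?js //; lia.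
Qed.

Lemma matches_catr w x y p : matches_at w (x ++ y) p -> matches_at w y (p + size x).
Proof.
move/matchesP => h; apply/matchesP => j js.
rewrite -addnA h ?size_cat ?onth_cat; last by lia.
by rewrite ltnNge leq_addr /= addKn.
Qed.

Lemma mcount_pos w s p : 0 < size w -> matches_at w s p -> 0 < mcount w s.
Proof.
move=> n0 hp; rewrite /mcount -has_count; apply/hasP; exists (p %% period w).
  by rewrite mem_iota add0n ltn_pmod //; case: (period_spec n0).
by rewrite matches_mod.
Qed.

Lemma count_lt (P Q : pred nat) l x : subpred P Q -> x \in l -> Q x -> ~~ P x ->
  count P l < count Q l.
Proof.
move=> sPQ; elim: l => [//|y l IH] /=; rewrite inE => /orP[/eqP<-|xl] Qx nPx.
  rewrite Qx (negbTE nPx) add0n add1n ltnS; exact: sub_count.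
rewrite -addnS; apply: leq_add; last exact: IH.
by case Py: (P y); rewrite // (sPQ _ Py).
Qed.

Lemma letter_ex w i : 0 < size w -> exists a, cletter w i = Some a.
Proof. by case: w => [//|x0 w'] n0; eexists; apply: (cletter_nth x0). Qed.

Lemma matches_size w s p : matches_at w s (p + size w) = matches_at w s p.
Proof.
apply: eq_all => j; rewrite addnAC; by have := cl_mul w (p + j) 1; rewrite mul1n => ->.
Qed.

Lemma left_ext (C : chromset T) s : MES (Fin s) C ->
  exists a b, a != b /\ substr_set (Fin (a :: s)) C /\ substr_set (Fin (b :: s)) C.
Proof.
case=> [[c [Cc [p hp]]] hm].
have n0 : 0 < size (val c) := valP c.
have [a ha] := letter_ex (p + size (val c)).-1 n0.
have Ha : substr_set (Fin (a :: s)) C.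
  exists c; split => //; exists (p + size (val c)).-1.
  by rewrite match_cons ha eqxx /= prednK ?matches_size // addn_gt0 n0 orbT.
case: (Classical_Prop.classic (exists b, b != a /\ substr_set (Fin (b :: s)) C)) =>
  [[b [ba hb]]|hn]; first by exists b, a.
exfalso.
have hps : proper_super (Fin s) (Fin (a :: s)).
  split; last exact: infix_cons.
  by apply/eqP => /(congr1 size) /=; lia.
have [c' [Cc' hlt]] := hm _ hps.
have n0' : 0 < size (val c') := valP c'.
suff : mcount (val c') s <= mcount (val c') (a :: s) by rewrite leqNgt hlt.
rewrite (mcount_shift _ 1 n0'); apply: sub_count => x /= hx.
have [b hb] := letter_ex x n0'.
have mb : matches_at (val c') (b :: s) x by rewrite match_cons hb eqxx -(addn1 x).
case: (b =P a) => [e|/eqP ne]; first by rewrite -e.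
by case: hn; exists b; split => //; exists c'; split => //; exists x.
Qed.

Lemma right_ext (C : chromset T) s : MES (Fin s) C ->
  exists a b, a != b /\ substr_set (Fin (rcons s a)) C /\ substr_set (Fin (rcons s b)) C.
Proof.
case=> [[c [Cc [p hp]]] hm].
have n0 : 0 < size (val c) := valP c.
have [a ha] := letter_ex (p + size s) n0.
have Ha : substr_set (Fin (rcons s a)) C.
  by exists c; split => //; exists p; rewrite match_rcons hp ha eqxx.
case: (Classical_Prop.classic (exists b, b != a /\ substr_set (Fin (rcons s b)) C)) =>
  [[b [ba hb]]|hn]; first by exists b, a.
exfalso.
have hps : proper_super (Fin s) (Fin (rcons s a)).
  split; last exact: infix_rcons.
  by apply/eqP => /(congr1 size); rewrite size_rcons; lia.
have [c' [Cc' hlt]] := hm _ hps.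
have n0' : 0 < size (val c') := valP c'.
suff : mcount (val c') s <= mcount (val c') (rcons s a) by rewrite leqNgt hlt.
apply: sub_count => x /= hx.
have [b hb] := letter_ex (x + size s) n0'.
have mb : matches_at (val c') (rcons s b) x by rewrite match_rcons hb hx eqxx.
case: (b =P a) => [e|/eqP ne]; first by rewrite -e.
by case: hn; exists b; split => //; exists c'; split => //; exists x.
Qed.

Lemma per_gt0 w : 0 < size w -> 0 < period w.
Proof. by case/period_spec. Qed.

Lemma left_strict w a b s r : 0 < size w -> a != b -> matches_at w (b :: s) r ->
  mcount w (a :: s) < mcount w s.
Proof.
move=> n0 ab hr; rewrite (mcount_shift s 1 n0).
have hr' : matches_at w (b :: s) (r %% period w) by rewrite matches_mod.
move: (hr'); rewrite match_cons => /andP[/eqP hb hs].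
apply: (count_lt (x := r %% period w)).
- by move=> x; rewrite match_cons addn1 => /andP[].
- by rewrite mem_iota add0n ltn_pmod // per_gt0.
- by rewrite addn1.
- by rewrite match_cons hb; apply/negP => /andP[/eqP [e] _]; rewrite e eqxx in ab.
Qed.

Lemma right_strict w a b s r : 0 < size w -> a != b -> matches_at w (rcons s b) r ->
  mcount w (rcons s a) < mcount w s.
Proof.
move=> n0 ab hr.
have hr' : matches_at w (rcons s b) (r %% period w) by rewrite matches_mod.
move: (hr'); rewrite match_rcons => /andP[hs /eqP hb].
apply: (count_lt (x := r %% period w)).
- by move=> x; rewrite match_rcons => /andP[].
- by rewrite mem_iota add0n ltn_pmod // per_gt0.
- by [].
- by rewrite match_rcons hb; apply/negP => /andP[_ /eqP [e]]; rewrite e eqxx in ab.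
Qed.

Lemma left_le w t1 a s t2 : 0 < size w ->
  mcount w (rcons t1 a ++ s ++ t2) <= mcount w (a :: s).
Proof.
move=> n0; rewrite (mcount_shift (a :: s) (size t1) n0); apply: sub_count => x /= h.
rewrite cat_rcons in h; have := matches_catr h.
by rewrite -cat_cons => /matches_catl.
Qed.

Lemma right_le w s a t2 : mcount w (rcons s a ++ t2) <= mcount w (rcons s a).
Proof. apply: sub_count => x; exact: matches_catl. Qed.

Lemma cyc_le1 w u : 0 < size w -> 0 < size u ->
  count (cmatches_at w u) (iota 0 (period w)) <= 1.
Proof.
move=> n0 m0; apply: count_le1; first exact: iota_uniq.
suff H : forall x y, x <= y -> x \in iota 0 (period w) -> y \in iota 0 (period w) ->
    cmatches_at w u x -> cmatches_at w u y -> x = y.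
  move=> x y xl yl Px Py; case: (leqP x y) => h; first exact: H.
  by apply/esym/H => //; apply: ltnW.
move=> x y xy xl yl Px Py.
have hx := cmatch_all n0 m0 Px; have hy := cmatch_all n0 m0 Py.
have sm : sym w (y - x).
  move=> i.
  have le : x <= x * size w by rewrite leq_pmulr.
  have e1 : i + x * size w = x + (i + x * size w - x) by lia.
  have e2 : y + (i + x * size w - x) = (i + (y - x)) + x * size w by lia.
  by rewrite -[in RHS](cl_mul w i x) e1 hx -hy e2 cl_mul.
have := sym_dvd n0 sm; move: yl; rewrite mem_iota add0n => yl.
rewrite /dvdn modn_small; last by lia.
move/eqP; lia.
Qed.

Lemma cyc_transfer w w' u p p' s r' : 0 < size w -> 0 < size w' -> 0 < size u ->
  cmatches_at w u p -> cmatches_at w' u p' -> matches_at w' s r' ->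
  matches_at w s (p + (r' + p' * size w' - p')).
Proof.
move=> n0 n0' m0 hp hp' /matchesP hr; apply/matchesP => j js.
have le : p' <= p' * size w' by rewrite leq_pmulr.
rewrite -addnA (cmatch_all n0 m0 hp) -(cmatch_all n0' m0 hp').
have -> : p' + (r' + p' * size w' - p' + j) = (r' + j) + p' * size w' by lia.
by rewrite cl_mul hr.
Qed.
End S.

Theorem theorem9 (T : finType) (C : chromset T) (s : seq T) :
  MES (Fin s) C <->
  exists c1 c2 c3 c4 : T,
    c1 != c2 /\ c3 != c4 /\
    substr_set (Fin (c1 :: s)) C /\ substr_set (Fin (c2 :: s)) C /\
    substr_set (Fin (rcons s c3)) C /\ substr_set (Fin (rcons s c4)) C.
Proof.
split.
  move=> hm; have [a [b [ab [Ha Hb]]]] := left_ext hm.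
  have [a' [b' [ab' [Ha' Hb']]]] := right_ext hm.
  by exists a, b, a', b'.
case=> [c1 [c2 [c3 [c4 [h12 [h34 [H1 [H2 [H3 H4]]]]]]]]].
have [c [Cc [r hr]]] := H1; have [c' [Cc' [r' hr']]] := H2.
have n0 : 0 < size (val c) := valP c.
have n0' : 0 < size (val c') := valP c'.
split.
  exists c; split => //; exists r.+1; by move: hr; rewrite match_cons => /andP[].
move=> [t|u] hsup.
  case: hsup => ts /infixP [t1 [t2 et]].
  case/lastP: t1 et => [|t1' a] et.
    case: t2 et => [|a t2'] et; first by rewrite et cats0 eqxx in ts.
    have [b [ba [cc [Ccc [rr hrr]]]]] : exists b, b != a /\ substr_set (Fin (rcons s b)) C.
      by case: (c3 =P a) => [e|/eqP ne]; [exists c4; rewrite -e eq_sym | exists c3].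
    have nc : 0 < size (val cc) := valP cc.
    exists cc; split => //.
    change (mcount (val cc) t < mcount (val cc) s).
    rewrite et /= -cat_rcons.
    have ab : a != b by rewrite eq_sym.
    exact: leq_ltn_trans (right_le _ _ _ _) (right_strict nc ab hrr).
  have [b [ba [cc [Ccc [rr hrr]]]]] : exists b, b != a /\ substr_set (Fin (b :: s)) C.
    by case: (c1 =P a) => [e|/eqP ne]; [exists c2; rewrite -e eq_sym | exists c1].
  have nc : 0 < size (val cc) := valP cc.
  exists cc; split => //.
  change (mcount (val cc) t < mcount (val cc) s).
  rewrite et.
  have ab : a != b by rewrite eq_sym.
  exact: leq_ltn_trans (left_le _ _ _ _ nc) (left_strict nc ab hrr).
have m0 : 0 < size (val u) := valP u.
have hs : matches_at (val c) s r.+1 by move: hr; rewrite match_cons => /andP[].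
have hs' : matches_at (val c') s r'.+1 by move: hr'; rewrite match_cons => /andP[].
case E: (count (cmatches_at (val c) (val u)) (iota 0 (period (val c)))) => [|k].
  exists c; split => //; rewrite /occ E; exact: (mcount_pos n0 hs).
case E': (count (cmatches_at (val c') (val u)) (iota 0 (period (val c')))) => [|k'].
  exists c'; split => //; rewrite /occ E'; exact: (mcount_pos n0' hs').
have [p _ hp] : exists2 p, p \in iota 0 (period (val c)) & cmatches_at (val c) (val u) p.
  by apply/hasP; rewrite has_count E.
have [p' _ hp'] : exists2 p, p \in iota 0 (period (val c')) & cmatches_at (val c') (val u) p.
  by apply/hasP; rewrite has_count E'.
exists c; split => //; rewrite /occ.
apply: leq_ltn_trans (cyc_le1 n0 m0) _.
have hr2 := cyc_transfer n0 n0' m0 hp hp' hr'.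
set R := p + _ in hr2.
change (1 < mcount (val c) s); rewrite (mcount_shift s 1 n0).
have d0 := per_gt0 n0.
have hx : matches_at (val c) (c1 :: s) (r %% period (val c)) by rewrite matches_mod.
have hy : matches_at (val c) (c2 :: s) (R %% period (val c)) by rewrite matches_mod.
move: hx hy; rewrite !match_cons => /andP[/eqP lx mx] /andP[/eqP ly my].
apply: (count_ge2 (x := r %% period (val c)) (y := R %% period (val c))).
- exact: iota_uniq.
- by rewrite mem_iota add0n ltn_pmod.
- by rewrite mem_iota add0n ltn_pmod.
- apply/eqP => e; move: ly; rewrite -e lx => -[e2]; by rewrite e2 eqxx in h12.
- by rewrite /= addn1.
- by rewrite /= addn1.
Qed.
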